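(* Let $\alpha,\rho\in(-\infty,1)\setminus\{0\}$ and $\sigma>0$, and let $a,b$ be constants. Consider the market with risk-free rate $r=0$ and risky asset $\mathrm{d}S_t=\sigma S_t\,\mathrm{d}W^1_t$ (that is, drift $\mu=0$). The force of mortality $\lambda_t$ follows $$\mathrm{d}\lambda_t=a\lambda_t^2\,\mathrm{d}t+b\lambda_t^{3/2}\,\mathrm{d}W^2_t,$$ with $W^2$ a Brownian motion independent of $W^1$. In an insured drawdown fund with longevity credits, the wealth satisfies $$\mathrm{d}w_t=(k\lambda_tw_t-c_t)\,\mathrm{d}t+q_t\sigma S_t\,\mathrm{d}W^1_t,$$ with $k=1$, where $c_t$ is the consumption rate and $q_t$ the quantity of the risky asset held. Preferences are continuous-time Epstein--Zin with mortality and discount rate $\delta=0$, with aggregator $$f(c,V,\lambda)=\frac1\rho c^\rho(\alpha V)^{1-\frac\rho\alpha}-\lambda V.$$ The associated Hamilton--Jacobi--Bellman equation for the value function $V(t,w,\lambda,S)$ is $$0=\sup_{c,q}\Big[\partial_tV+q\sigma^2S^2\partial_{wS}V+\tfrac12q^2\sigma^2S^2\partial_{ww}V+\tfrac12\sigma^2S^2\partial_{SS}V+a\lambda^2\partial_\lambda V+\tfrac12b^2\lambda^3\partial_{\lambda\lambda}V+\partial_wV\,(k\lambda w-c)+f(c,V,\lambda)\Big].$$ Then this equation has the trivial solution $V\equiv0$, together with the additional analytic solution $$V=\frac{w^\alpha}{\alpha}\,\lambda^{\frac{\alpha(\rho-1)}{\rho}}\left(\frac{(k\alpha-1)\rho}{\alpha(\rho-1)}+a+\frac{b^2(\alpha(\rho-1)-\rho)}{2\rho}\right)^{\frac{\alpha(\rho-1)}{\rho}},$$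 valid so long as the term in brackets is positive.
   Context: The continuous-time Epstein--Zin utility with mortality of a consumption stream is the solution $V$ of the backward SDE $\mathrm{d}V_t=-f(c_t,V_t,\lambda_t)\,\mathrm{d}t+Z_t\,\mathrm{d}W_t$ with $\lim_{t\to\infty}V_t=0$. The parameter $k\in\{0,1\}$ indicates whether longevity credits (the term $k\lambda w$ in the wealth drift) are paid; here $k=1$. *)

(* Defs.v *)
From HB Require Import structures.
From mathcomp Require Import all_boot all_order all_algebra.
From mathcomp Require Import all_classical all_reals all_analysis.
Set Implicit Arguments. Unset Strict Implicit. Unset Printing Implicit Defensive.
Import Order.TTheory GRing.Theory Num.Theory.
Local Open Scope ring_scope.

Section EZ.
Variable R : realType.

(* power with the convention that a nonpositive base gives 0
   (only used for the felicity factor (alpha V)^(1 - rho/alpha)) *)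
Definition ppow (x e : R) : R := if 0 < x then x `^ e else 0.

Definition ez_aggregator (alpha rho c V l : R) : R :=
  1 / rho * c `^ rho * ppow (alpha * V) (1 - rho / alpha) - l * V.

Definition valfun := R -> R -> R -> R -> R.   (* V t w lambda S *)

Definition d_t (V : valfun) t w l S : R := derive1 (fun x => V x w l S) t.
Definition d_w (V : valfun) t w l S : R := derive1 (fun x => V t x l S) w.
Definition d_l (V : valfun) t w l S : R := derive1 (fun x => V t w x S) l.
Definition d_S (V : valfun) t w l S : R := derive1 (fun x => V t w l x) S.
Definition d_ww (V : valfun) t w l S : R := derive1 (fun x => d_w V t x l S) w.
Definition d_wS (V : valfun) t w l S : R := derive1 (fun x => d_w V t w l x) S.
Definition d_SS (V : valfun) t w l S : R := derive1 (fun x => d_S V t w l x) S.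
Definition d_ll (V : valfun) t w l S : R := derive1 (fun x => d_l V t w x S) l.

Definition hjb_derivable (V : valfun) t w l S : Prop :=
  derivable (fun x => V x w l S) t 1 /\
  derivable (fun x => V t x l S) w 1 /\
  derivable (fun x => V t w x S) l 1 /\
  derivable (fun x => V t w l x) S 1 /\
  derivable (fun x => d_w V t x l S) w 1 /\
  derivable (fun x => d_w V t w l x) S 1 /\
  derivable (fun x => d_S V t w l x) S 1 /\
  derivable (fun x => d_l V t w x S) l 1.

Definition hjb_hamiltonian (alpha rho sigma a b k : R) (V : valfun)
    t w l S (c q : R) : R :=
  d_t V t w l S
  + q * sigma ^+ 2 * S ^+ 2 * d_wS V t w l S
  + 1 / 2 * q ^+ 2 * sigma ^+ 2 * S ^+ 2 * d_ww V t w l S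
  + 1 / 2 * sigma ^+ 2 * S ^+ 2 * d_SS V t w l S
  + a * l ^+ 2 * d_l V t w l S
  + 1 / 2 * b ^+ 2 * l ^+ 3 * d_ll V t w l S
  + d_w V t w l S * (k * l * w - c)
  + ez_aggregator alpha rho c (V t w l S) l.

Definition solves_hjb (alpha rho sigma a b k : R) (V : valfun) : Prop :=
  forall t w l S, 0 < w -> 0 < l -> 0 < S ->
    hjb_derivable V t w l S /\
    ereal_sup [set (hjb_hamiltonian alpha rho sigma a b k V t w l S c q)%:E
              | c in [set c : R | 0 < c] & q in [set: R]] = 0%E.

End EZ.

(* Main.v *)
Require Import Defs.
From HB Require Import structures.
From mathcomp Require Import all_boot all_order all_algebra.
From mathcomp Require Import all_classical all_reals all_analysis.
From mathcomp Require Import ring lra.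
Import Order.TTheory GRing.Theory Num.Theory.
Local Open Scope ring_scope.

Ltac pos := repeat (apply: divr_gt0 || apply: mulr_gt0 || rewrite invr_gt0 || apply: powR_gt0 || apply: expR_gt0 || assumption).

Section H.
Variable R : realType.

Lemma young (rho x : R) : rho < 1 -> rho != 0 -> 0 < x ->
  x `^ rho / rho - x <= 1 / rho - 1.
Proof.
move=> r1 r0 x0.
have xe : x = expR (ln x) by rewrite lnK.
have pe : x `^ rho = expR (rho * ln x) by rewrite /powR gt_eqF.
rewrite pe {2}xe; set t := ln x.
have [rn|rp] := ltP rho 0.
  have h1 := expR_ge1Dx (rho * t).
  have h2 := expR_ge1Dx t.
  have i0 : rho^-1 < 0 by rewrite invr_lt0.
  have : (expR (rho * t) - (1 + rho * t)) * rho^-1 <= 0.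
    by apply: mulr_ge0_le0; [rewrite subr_ge0 | exact: ltW].
  rewrite mulrBl mulrDl mulrAC divff // mul1r => h.
  rewrite ?mul1r; lra.
have rp' : 0 < rho by rewrite lt_neqAle eq_sym r0.
have := convex_expR (Itv01 (ltW rp') (ltW r1)) t 0.
rewrite !convRE /= expR0 mulr0 addr0 mulr1 (mulrC rho) => h.
have i0 : 0 < rho^-1 by rewrite invr_gt0.
have : (expR (t * rho) - (rho * expR t + (1 - rho))) * rho^-1 <= 0.
  by apply: mulr_le0_ge0; [rewrite subr_le0 | exact: ltW].
rewrite mulrBl mulrDl mulrAC divff // mul1r mulrBl divff // mul1r mulrC => h2.
rewrite ?mul1r; lra.
Qed.

Lemma hcst (f : R -> R) c x : (forall y, f y = c) ->
  derivable f x 1 /\ derive1 f x = 0.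
Proof.
move=> h; have -> : f = cst c by apply: funext => y; rewrite h.
by split; [exact: derivable_cst | exact: derive1_cst].
Qed.

Lemma hpow (f : R -> R) C e x : 0 < x ->
  (forall y, 0 < y -> f y = C * y `^ e) ->
  derivable f x 1 /\ derive1 f x = C * (e * x `^ (e - 1)).
Proof.
move=> x0 h.
have hd : is_derive x (1:R) (C \*: (@powR R ^~ e)) (C *: (e * x `^ (e - 1))).
  by apply: is_deriveZ; exact: is_derive1_powR.
have nr : \near x, (C \*: (@powR R ^~ e)) x = f x.
  near=> y; rewrite h //=; near: y; exact: lt_nbhsr.
have := near_eq_is_derive nr hd => -[df dv].
by split => //; rewrite derive1E dv.
Unshelve. all: by end_near. Qed.

Lemma sup0 (F : R -> R -> R) : (forall c q, 0 < c -> F c q <= 0) ->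
  (exists c, 0 < c /\ F c 0 = 0) ->
  ereal_sup [set (F c q)%:E | c in [set c : R | 0 < c] & q in [set: R]] = 0%E.
Proof.
move=> hle [c0 [c0p hc0]]; apply/eqP; rewrite eq_le; apply/andP; split.
  apply: ub_ereal_sup => _ [c /= cp [q _ <-]].
  by rewrite lee_fin hle.
apply: ereal_sup_ubound => /=; exists c0 => //; exists 0 => //.
by rewrite hc0.
Qed.

Lemma pm1 (x e : R) : 0 < x -> x `^ (e - 1) = x `^ e / x.
Proof. move=> x0; rewrite (@powRB _ x e 1) ?powRr1 ?(ltW x0) //; by apply/implyP => _; rewrite gt_eqF. Qed.


Lemma lnM' (x y : R) : 0 < x -> 0 < y -> ln (x * y) = ln x + ln y.
Proof. by move=> x0 y0; rewrite lnM ?posrE. Qed.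
Lemma lnD' (x y : R) : 0 < x -> 0 < y -> ln (x / y) = ln x - ln y.
Proof. by move=> x0 y0; rewrite ln_div ?posrE. Qed.

Lemma lnV' (x : R) : 0 < x -> ln (x^-1) = - ln x.
Proof. by move=> x0; rewrite lnV ?posrE. Qed.

Lemma keyid (al rho c w l K : R) : 0 < c -> 0 < w -> 0 < l -> 0 < K ->
  al != 0 -> rho != 0 ->
  c `^ rho * (w `^ al * l `^ (al * (rho - 1) / rho) * K `^ (al * (rho - 1) / rho)) `^ (1 - rho / al)
  = (c / (w * l * K)) `^ rho *
    (w `^ al * l `^ (al * (rho - 1) / rho) * K `^ (al * (rho - 1) / rho) * l * K).
Proof.
move=> c0 w0 l0 K0 a0 r0.

apply: (@ln_inj R); rewrite ?inE ?posrE; try by pos.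
rewrite !lnM'; try by pos.
rewrite !ln_powR; rewrite !lnM'; try by pos.
rewrite !lnV'; try by pos.
rewrite !lnM'; try by pos.
rewrite !ln_powR.

by field; rewrite r0 a0.
Qed.

End H.

Theorem theorem4 (R : realType) (alpha rho sigma a b k : R) :
  alpha < 1 -> alpha != 0 -> rho < 1 -> rho != 0 -> 0 < sigma -> k = 1 ->
  solves_hjb alpha rho sigma a b k (fun _ _ _ _ => 0) /\
  (let K := (k * alpha - 1) * rho / (alpha * (rho - 1)) + a
            + b ^+ 2 * (alpha * (rho - 1) - rho) / (2 * rho) in
   0 < K ->
   solves_hjb alpha rho sigma a b k
     (fun t w l S => w `^ alpha / alpha * l `^ (alpha * (rho - 1) / rho)
                     * K `^ (alpha * (rho - 1) / rho))).
Proof.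
move=> a1 a0 r1 r0 s0 ->; split.
  move=> t w l S w0 l0 S0.
  have D0 : forall x : R, derive1 (fun _ : R => (0:R)) x = 0.
    by move=> x; exact: (@hcst R (fun _ => 0) 0 x (fun _ => erefl)).2.
  have E : (fun x : R => derive1 (fun _ : R => (0:R)) x) = (fun _ => 0).
    by apply: funext => x; exact: D0.
  rewrite /hjb_derivable /hjb_hamiltonian /d_t /d_w /d_l /d_S /d_ww /d_wS /d_SS /d_ll /=.
  rewrite !E !D0; split; first by repeat split; exact: derivable_cst.
  rewrite /ez_aggregator /ppow !mulr0 ltxx.
  apply: sup0.
    by move=> c q _; rewrite !(mulr0, mul0r, addr0, add0r, subrr) ?oppr0.
  exists 1; split; first exact: ltr01.
  by rewrite !(mulr0, mul0r, addr0, add0r, subrr) oppr0.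
move=> K K0 t w l S w0 l0 S0.
set be := alpha * (rho - 1) / rho.
set pK := K `^ be.
have hw : forall y, 0 < y ->
    derivable (fun x => x `^ alpha / alpha * l `^ be * pK) y 1 /\
    derive1 (fun x => x `^ alpha / alpha * l `^ be * pK) y
      = (l `^ be * pK / alpha) * (alpha * y `^ (alpha - 1)).
  move=> y y0; apply: hpow => // z _; ring.
have hww := @hpow R (fun y => derive1 (fun x => x `^ alpha / alpha * l `^ be * pK) y)
   (l `^ be * pK) (alpha - 1) w w0
   (fun y y0 => ltac:(cbv beta; rewrite (hw y y0).2; field; exact: a0)).
have hl : forall y, 0 < y ->
    derivable (fun x => w `^ alpha / alpha * x `^ be * pK) y 1 /\
    derive1 (fun x => w `^ alpha / alpha * x `^ be * pK) y
      = (w `^ alpha / alpha * pK) * (be * y `^ (be - 1)).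
  move=> y y0; apply: hpow => // z _; ring.
have hll := @hpow R (fun y => derive1 (fun x => w `^ alpha / alpha * x `^ be * pK) y)
   (w `^ alpha / alpha * pK * be) (be - 1) l l0
   (fun y y0 => ltac:(cbv beta; rewrite (hl y y0).2; ring)).
have ht := @hcst R (fun _ => w `^ alpha / alpha * l `^ be * pK) _ t (fun _ => erefl).
have hS := @hcst R (fun _ => w `^ alpha / alpha * l `^ be * pK) _ S (fun _ => erefl).
have hwS := @hcst R (fun _ => derive1 (fun x => x `^ alpha / alpha * l `^ be * pK) w) _ S (fun _ => erefl).
have hSS := @hcst R (fun y => derive1 (fun _ => w `^ alpha / alpha * l `^ be * pK) y) 0 S
   (fun y => (@hcst R (fun _ => w `^ alpha / alpha * l `^ be * pK) _ y (fun _ => erefl)).2).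
rewrite /hjb_derivable /hjb_hamiltonian /d_t /d_w /d_l /d_S /d_ww /d_wS /d_SS /d_ll /=.
split.
  by split; [exact: ht.1|split; [exact: (hw w w0).1|split; [exact: (hl l l0).1|split; [exact: hS.1|
    split; [exact: hww.1|split; [exact: hwS.1|split; [exact: hSS.1|exact: hll.1]]]]]]].
rewrite ht.2 (hw w w0).2 (hl l l0).2 hww.2 hwS.2 hSS.2 hll.2.
rewrite (@pm1 R w (alpha-1) w0) (@pm1 R w alpha w0) (@pm1 R l (be-1) l0) (@pm1 R l be l0).
rewrite /ez_aggregator /ppow.
have eX : alpha * (w `^ alpha / alpha * l `^ be * pK) = w `^ alpha * l `^ be * pK.
  by field.
have X0 : 0 < w `^ alpha * l `^ be * pK by pos.
rewrite eX X0.
have coef0 : a * be / alpha + b ^+ 2 * be * (be - 1) / (2 * alpha) + 1 - 1 / alpha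
    + K * (1 / rho - 1) = 0.
  have r10 : rho - 1 != 0 by rewrite subr_eq0 lt_eqF.
  by rewrite /K /be; field; rewrite r0 r10 a0.
apply: sup0.
  move=> c q c0.
  have kk := @keyid R alpha rho c w l K c0 w0 l0 K0 a0 r0.
  rewrite -/be -/pK in kk.
  rewrite -[1 / rho * _ * _]mulrA kk.
  have hy := @young R rho (c / (w * l * K)) r1 r0 ltac:(pos).
  set y := (c / (w * l * K)) `^ rho in hy *.
  rewrite [leLHS](_ : _ =
     1 / 2 * q ^+ 2 * sigma ^+ 2 * S ^+ 2 * (l `^ be * pK) * (alpha - 1) * (w `^ alpha / w / w)
     + (w `^ alpha * l `^ be * pK * l * K) * (y / rho - c / (w * l * K) - (1 / rho - 1))
     + (w `^ alpha * l `^ be * pK * l) * (a * be / alpha + b ^+ 2 * be * (be - 1) / (2 * alpha) + 1 - 1 / alpha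
    + K * (1 / rho - 1))); last first.
    by field; rewrite r0 a0 !gt_eqF.
  rewrite coef0 mulr0 addr0.
  have h1 : 0 <= 1 / 2 * q ^+ 2 * sigma ^+ 2 * S ^+ 2 * (l `^ be * pK) * (1 - alpha) * (w `^ alpha / w / w).
    apply: mulr_ge0; last by apply: ltW; pos.
    apply: mulr_ge0; last by rewrite subr_ge0 ltW.
    apply: mulr_ge0; last by apply: ltW; pos.
    apply: mulr_ge0; last exact: sqr_ge0.
    apply: mulr_ge0; last exact: sqr_ge0.
    by apply: mulr_ge0; [apply: ltW; pos | exact: sqr_ge0].
  have h2 : (w `^ alpha * l `^ be * pK * l * K) * (y / rho - c / (w * l * K) - (1 / rho - 1)) <= 0.
    by apply: mulr_ge0_le0; [apply: ltW; pos | rewrite subr_le0].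
  have eA : 1 / 2 * q ^+ 2 * sigma ^+ 2 * S ^+ 2 * (l `^ be * pK) * (alpha - 1) * (w `^ alpha / w / w)
    = - (1 / 2 * q ^+ 2 * sigma ^+ 2 * S ^+ 2 * (l `^ be * pK) * (1 - alpha) * (w `^ alpha / w / w)).
    by ring.
  by rewrite eA -oppr_ge0 opprD opprK addr_ge0 // oppr_ge0.
exists (w * l * K); split; first by pos.
have c0 : 0 < w * l * K by pos.
have kk := @keyid R alpha rho (w * l * K) w l K c0 w0 l0 K0 a0 r0.
rewrite -/be -/pK divff ?gt_eqF // powR1 in kk.
rewrite -[1 / rho * _ * _]mulrA kk.
rewrite [LHS](_ : _ = (w `^ alpha * l `^ be * pK * l) * (a * be / alpha + b ^+ 2 * be * (be - 1) / (2 * alpha) + 1 - 1 / alpha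
    + K * (1 / rho - 1))); first by rewrite coef0 mulr0.
by field; rewrite r0 a0 !gt_eqF.

Qed.
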